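(* Let $\alpha>1$ and let $m_0\in\mathrm{BUC}([0,\infty))$ be non-decreasing with $m_0(0)=0$, $M=\sup m_0>0$, and suppose there is $c_0\in(0,\infty)$ with $m_0(\rho)<M$ for $\rho<c_0$ and $m_0(\rho)=M$ for $\rho\ge c_0$ (i.e. $c_0=\max\operatorname{supp}u_0$ for $u_0=(m_0)_\rho$). If $$\limsup_{\rho\to c_0^-}\frac{M-m_0(\rho)}{(c_0-\rho)^{\frac\alpha{\alpha-1}}}<+\infty,$$ then there is a waiting time: there exists $T>0$ such that the viscosity solution $m$ of the mass problem with datum $m_0$ satisfies $m(t,\rho)=M$ for all $\rho\ge c_0$ and all $t\in[0,T)$ (so the support of $u(t,\cdot)=m_\rho(t,\cdot)$ stays in $[0,c_0]$).
   Context: $\mathrm{BUC}$ denotes bounded uniformly continuous functions. The mass problem is $m_t+(m_\rho)_+^\alpha m=0$ ($t,\rho>0$), $m(t,0)=0$, $m(0,\cdot)=m_0$, understood in the viscosity sense: with Fréchet super/subdifferentials $D^\pm$, a continuous $m$ is a subsolution if $p_1+(p_2)_+^\alpha m\le0$ for $(p_1,p_2)\in D^+m(t,\rho)$, $m(0,\cdot)\le m_0$, $m(t,0)\le0$; a supersolution with reversed inequalities and $D^-$; a solution if both. Known facts used as standing background: for $m_0\in\mathrm{BUC}$ non-decreasing with $m_0(0)=0$ there is a unique $\mathrm{BUC}$ viscosity solution, and uniformly continuous sub- and supersolutions are ordered (comparison principle). *)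

(* Defs.v *)
From Stdlib Require Import Reals.
Open Scope R_scope.

(* Positive part raised to the power a (a > 1, so 0^a = 0). *)
Definition pospow (p a : R) : R := if Rle_dec p 0 then 0 else Rpower p a.

Definition BUC1 (f : R -> R) : Prop :=
  (exists B, forall x, 0 <= x -> Rabs (f x) <= B) /\
  (forall eps, 0 < eps -> exists del, 0 < del /\
     forall x y, 0 <= x -> 0 <= y -> Rabs (x - y) < del -> Rabs (f x - f y) < eps).

Definition BUC2 (m : R -> R -> R) : Prop :=
  (exists B, forall t r, 0 <= t -> 0 <= r -> Rabs (m t r) <= B) /\
  (forall eps, 0 < eps -> exists del, 0 < del /\
     forall t r s q, 0 <= t -> 0 <= r -> 0 <= s -> 0 <= q ->
       Rabs (t - s) < del -> Rabs (r - q) < del -> Rabs (m t r - m s q) < eps).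

Definition cont_quadrant (m : R -> R -> R) : Prop :=
  forall t r, 0 <= t -> 0 <= r -> forall eps, 0 < eps -> exists del, 0 < del /\
    forall s q, 0 <= s -> 0 <= q -> Rabs (s - t) < del -> Rabs (q - r) < del ->
      Rabs (m s q - m t r) < eps.

(* Frechet superdifferential D^+ m(t,r):
   limsup_{(s,q)->(t,r)} [m(s,q)-m(t,r)-p1(s-t)-p2(q-r)] / |(s-t,q-r)| <= 0. *)
Definition superdiff (m : R -> R -> R) (t r p1 p2 : R) : Prop :=
  forall eps, 0 < eps -> exists del, 0 < del /\
    forall s q, Rabs (s - t) < del -> Rabs (q - r) < del ->
      m s q - m t r - p1 * (s - t) - p2 * (q - r) <= eps * (Rabs (s - t) + Rabs (q - r)).

Definition subdiff (m : R -> R -> R) (t r p1 p2 : R) : Prop :=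
  forall eps, 0 < eps -> exists del, 0 < del /\
    forall s q, Rabs (s - t) < del -> Rabs (q - r) < del ->
      m s q - m t r - p1 * (s - t) - p2 * (q - r) >= - eps * (Rabs (s - t) + Rabs (q - r)).

Definition visc_sub (a : R) (m0 : R -> R) (m : R -> R -> R) : Prop :=
  cont_quadrant m /\
  (forall t r p1 p2, 0 < t -> 0 < r -> superdiff m t r p1 p2 ->
     p1 + pospow p2 a * m t r <= 0) /\
  (forall r, 0 <= r -> m 0 r <= m0 r) /\
  (forall t, 0 <= t -> m t 0 <= 0).

Definition visc_super (a : R) (m0 : R -> R) (m : R -> R -> R) : Prop :=
  cont_quadrant m /\
  (forall t r p1 p2, 0 < t -> 0 < r -> subdiff m t r p1 p2 ->
     p1 + pospow p2 a * m t r >= 0) /\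
  (forall r, 0 <= r -> m 0 r >= m0 r) /\
  (forall t, 0 <= t -> m t 0 >= 0).

Definition visc_sol (a : R) (m0 : R -> R) (m : R -> R -> R) : Prop :=
  visc_sub a m0 m /\ visc_super a m0 m.

(* Main.v *)
Require Import Defs.
From Stdlib Require Import Reals Lra Psatz ClassicalEpsilon.
Open Scope R_scope.

Lemma Rabs_le_inv x e : Rabs x <= e -> -e <= x <= e.
Proof. intros H. unfold Rabs in H. destruct (Rcase_abs x); lra. Qed.

Definition FD (f : R -> R -> R) t r p1 p2 := forall eps, 0 < eps -> exists del, 0 < del /\
  forall s q, Rabs (s - t) < del -> Rabs (q - r) < del ->
    Rabs (f s q - f t r - p1*(s-t) - p2*(q-r)) <= eps * (Rabs (s-t) + Rabs (q-r)).

Definition D1 (f : R -> R) x d := forall eps, 0 < eps -> exists del, 0 < del /\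
  forall y, Rabs (y - x) < del -> Rabs (f y - f x - d*(y-x)) <= eps * Rabs (y-x).

Lemma D1_of_derivable f x d : derivable_pt_lim f x d -> D1 f x d.
Proof.
  intros H eps He. destruct (H eps He) as [del Hd]. exists del; split; [apply cond_pos|].
  intros y Hy. destruct (Req_dec y x) as [->|Hne].
  - replace (f x - f x - d*(x-x)) with 0 by ring. rewrite Rminus_diag, Rabs_R0. lra.
  - specialize (Hd (y - x)). replace (x + (y-x)) with y in Hd by ring.
    assert (Hyx : y - x <> 0) by lra.
    specialize (Hd Hyx Hy).
    replace (f y - f x - d*(y-x)) with (((f y - f x)/(y-x) - d) * (y-x)) by (field; auto).
    rewrite Rabs_mult. apply Rmult_le_compat_r; [apply Rabs_pos | lra].
Qed.

Lemma D1_quad f x d K : 0 <= K ->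
  (forall y, Rabs (f y - f x - d*(y-x)) <= K * (y-x)^2) -> D1 f x d.
Proof.
  intros HK H eps He. exists (eps/(K+1)). split.
  { apply Rdiv_lt_0_compat; lra. }
  intros y Hy. eapply Rle_trans; [apply H|].
  rewrite <- (pow2_abs (y-x)).
  assert (0 <= Rabs (y-x)) by apply Rabs_pos.
  assert (Rabs (y-x) * (K+1) < eps).
  { apply (Rmult_lt_compat_r (K+1)) in Hy; [|lra].
    unfold Rdiv in Hy. rewrite Rmult_assoc, Rinv_l in Hy; lra. }
  nra.
Qed.

Lemma FD_plus f g t r p1 p2 q1 q2 : FD f t r p1 p2 -> FD g t r q1 q2 ->
  FD (fun s q => f s q + g s q) t r (p1+q1) (p2+q2).
Proof.
  intros Hf Hg eps He.
  destruct (Hf (eps/2)) as [d1 [Hd1 H1]]; [lra|].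
  destruct (Hg (eps/2)) as [d2 [Hd2 H2]]; [lra|].
  exists (Rmin d1 d2). split; [apply Rmin_pos; lra|].
  intros s q Hs Hq.
  assert (Hs1 : Rabs (s-t) < d1) by (eapply Rlt_le_trans; [apply Hs| apply Rmin_l]).
  assert (Hs2 : Rabs (s-t) < d2) by (eapply Rlt_le_trans; [apply Hs| apply Rmin_r]).
  assert (Hq1 : Rabs (q-r) < d1) by (eapply Rlt_le_trans; [apply Hq| apply Rmin_l]).
  assert (Hq2 : Rabs (q-r) < d2) by (eapply Rlt_le_trans; [apply Hq| apply Rmin_r]).
  specialize (H1 s q Hs1 Hq1). specialize (H2 s q Hs2 Hq2).
  replace (f s q + g s q - (f t r + g t r) - (p1 + q1) * (s - t) - (p2 + q2) * (q - r))
    with ((f s q - f t r - p1 * (s - t) - p2 * (q - r)) + (g s q - g t r - q1 * (s - t) - q2 * (q - r))) by ring.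
  eapply Rle_trans; [apply Rabs_triang|]. lra.
Qed.

Lemma FD_scal k f t r p1 p2 : FD f t r p1 p2 ->
  FD (fun s q => k * f s q) t r (k*p1) (k*p2).
Proof.
  intros Hf eps He.
  assert (Hk : 0 < Rabs k + 1) by (pose proof (Rabs_pos k); lra).
  destruct (Hf (eps/(Rabs k + 1))) as [d [Hd H]]; [apply Rdiv_lt_0_compat; lra|].
  exists d. split; auto. intros s q Hs Hq. specialize (H s q Hs Hq).
  replace (k * f s q - k * f t r - k * p1 * (s - t) - k * p2 * (q - r))
    with (k * (f s q - f t r - p1 * (s - t) - p2 * (q - r))) by ring.
  rewrite Rabs_mult.
  assert (0 <= Rabs (s-t) + Rabs (q-r)) by (pose proof (Rabs_pos (s-t)); pose proof (Rabs_pos (q-r)); lra).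
  assert (E : eps / (Rabs k + 1) * (Rabs k + 1) = eps) by (field; lra).
  pose proof (Rabs_pos k).
  pose proof (Rabs_pos (f s q - f t r - p1 * (s - t) - p2 * (q - r))).
  nra.
Qed.

Lemma FD_const c t r : FD (fun _ _ => c) t r 0 0.
Proof.
  intros eps He. exists 1. split; [lra|]. intros s q _ _.
  replace (c - c - 0 * (s - t) - 0 * (q - r)) with 0 by ring. rewrite Rabs_R0.
  pose proof (Rabs_pos (s-t)); pose proof (Rabs_pos (q-r)); nra.
Qed.

Lemma FD_t u t r d : D1 u t d -> FD (fun s q => u s) t r d 0.
Proof.
  intros H eps He. destruct (H eps He) as [del [Hd H1]]. exists del; split; auto.
  intros s q Hs Hq. specialize (H1 s Hs).
  replace (u s - u t - d * (s - t) - 0 * (q - r)) with (u s - u t - d * (s - t)) by ring.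
  pose proof (Rabs_pos (q-r)); nra.
Qed.

Lemma FD_r u t r d : D1 u r d -> FD (fun s q => u q) t r 0 d.
Proof.
  intros H eps He. destruct (H eps He) as [del [Hd H1]]. exists del; split; auto.
  intros s q Hs Hq. specialize (H1 q Hq).
  replace (u q - u r - 0 * (s - t) - d * (q - r)) with (u q - u r - d * (q - r)) by ring.
  pose proof (Rabs_pos (s-t)); nra.
Qed.

Lemma FD_sr u t r d : D1 u r d -> FD (fun s q => s * u q) t r (u r) (t*d).
Proof.
  intros H eps He.
  set (eta := Rmin 1 (eps/(2*(Rabs t+1)))).
  assert (Ht : 0 < Rabs t + 1) by (pose proof (Rabs_pos t); lra).
  assert (Heta : 0 < eta) by (apply Rmin_pos; [lra| apply Rdiv_lt_0_compat; lra]).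
  destruct (H eta Heta) as [d1 [Hd1 H1]].
  assert (Hdd : 0 < Rabs d + 1) by (pose proof (Rabs_pos d); lra).
  set (del := Rmin d1 (eps/(2*(Rabs d+1)))).
  assert (Hdel : 0 < del) by (apply Rmin_pos; [lra| apply Rdiv_lt_0_compat; lra]).
  exists del. split; auto. intros s q Hs Hq.
  assert (Hq1 : Rabs (q-r) < d1) by (eapply Rlt_le_trans; [apply Hq| apply Rmin_l]).
  assert (Hq2 : Rabs (q-r) < eps/(2*(Rabs d+1))) by (eapply Rlt_le_trans; [apply Hq| apply Rmin_r]).
  specialize (H1 q Hq1).
  replace (s * u q - t * u r - u r * (s - t) - t * d * (q - r))
    with (t * (u q - u r - d*(q-r)) + (s-t) * (u q - u r - d*(q-r)) + (s-t)*(d*(q-r))) by ring.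
  assert (He1 : eta <= 1) by apply Rmin_l.
  assert (He2 : eta <= eps/(2*(Rabs t+1))) by apply Rmin_r.
  assert (E1 : eps/(2*(Rabs t+1)) * (Rabs t + 1) = eps/2) by (field; lra).
  assert (E2 : eps/(2*(Rabs d+1)) * (Rabs d + 1) = eps/2) by (field; lra).
  set (X := u q - u r - d*(q-r)) in *.
  pose proof (Rabs_pos t). pose proof (Rabs_pos d). pose proof (Rabs_pos (s-t)).
  pose proof (Rabs_pos (q-r)). pose proof (Rabs_pos X).
  eapply Rle_trans; [apply Rabs_triang|].
  eapply Rle_trans; [apply Rplus_le_compat_r; apply Rabs_triang|].
  rewrite !Rabs_mult.
  assert (A1 : Rabs t * Rabs X <= eps/2 * Rabs (q-r)).
  { assert (Rabs X <= eps/(2*(Rabs t+1)) * Rabs (q-r)) by nra. nra. }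
  assert (A2 : Rabs (s-t) * Rabs X + Rabs (s-t) * (Rabs d * Rabs (q-r)) <= eps/2 * Rabs (s-t)).
  { assert (Rabs X <= Rabs (q-r)) by nra.
    assert (Rabs (q-r) * (Rabs d + 1) <= eps/2) by nra. nra. }
  nra.
Qed.

Lemma touch_sub m phi t1 r1 p1 p2 : 0 < t1 -> 0 < r1 -> FD phi t1 r1 p1 p2 ->
  (forall s q, 0 <= s -> 0 <= q -> m t1 r1 - phi t1 r1 <= m s q - phi s q) ->
  subdiff m t1 r1 p1 p2.
Proof.
  intros Ht Hr HF Hm eps He. destruct (HF eps He) as [d [Hd H]].
  exists (Rmin d (Rmin t1 r1)). split; [repeat apply Rmin_pos; lra|].
  intros s q Hs Hq.
  assert (Hs1 : Rabs (s-t1) < d) by (eapply Rlt_le_trans; [apply Hs| apply Rmin_l]).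
  assert (Hq1 : Rabs (q-r1) < d) by (eapply Rlt_le_trans; [apply Hq| apply Rmin_l]).
  assert (Hs2 : Rabs (s-t1) < t1) by (eapply Rlt_le_trans; [apply Hs| eapply Rle_trans; [apply Rmin_r|apply Rmin_l]]).
  assert (Hq2 : Rabs (q-r1) < r1) by (eapply Rlt_le_trans; [apply Hq| eapply Rle_trans; [apply Rmin_r|apply Rmin_r]]).
  specialize (H s q Hs1 Hq1).
  assert (0 <= s) by (apply Rabs_def2 in Hs2; lra).
  assert (0 <= q) by (apply Rabs_def2 in Hq2; lra).
  specialize (Hm s q H0 H1).
  apply Rabs_le_inv in H. lra.
Qed.

Lemma touch_super m phi t1 r1 p1 p2 : 0 < t1 -> 0 < r1 -> FD phi t1 r1 p1 p2 ->
  (forall s q, 0 <= s -> 0 <= q -> m s q - phi s q <= m t1 r1 - phi t1 r1) ->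
  superdiff m t1 r1 p1 p2.
Proof.
  intros Ht Hr HF Hm eps He. destruct (HF eps He) as [d [Hd H]].
  exists (Rmin d (Rmin t1 r1)). split; [repeat apply Rmin_pos; lra|].
  intros s q Hs Hq.
  assert (Hs1 : Rabs (s-t1) < d) by (eapply Rlt_le_trans; [apply Hs| apply Rmin_l]).
  assert (Hq1 : Rabs (q-r1) < d) by (eapply Rlt_le_trans; [apply Hq| apply Rmin_l]).
  assert (Hs2 : Rabs (s-t1) < t1) by (eapply Rlt_le_trans; [apply Hs| eapply Rle_trans; [apply Rmin_r|apply Rmin_l]]).
  assert (Hq2 : Rabs (q-r1) < r1) by (eapply Rlt_le_trans; [apply Hq| eapply Rle_trans; [apply Rmin_r|apply Rmin_r]]).
  specialize (H s q Hs1 Hq1).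
  assert (0 <= s) by (apply Rabs_def2 in Hs2; lra).
  assert (0 <= q) by (apply Rabs_def2 in Hq2; lra).
  specialize (Hm s q H0 H1).
  apply Rabs_le_inv in H. lra.
Qed.

Definition clamp R0 x := Rmax 0 (Rmin R0 x).
Lemma clamp_in R0 x : 0 <= R0 -> 0 <= clamp R0 x <= R0.
Proof. intros. unfold clamp, Rmax, Rmin. repeat destruct Rle_dec; lra. Qed.
Lemma clamp_id R0 x : 0 <= x <= R0 -> clamp R0 x = x.
Proof. intros. unfold clamp, Rmax, Rmin. repeat destruct Rle_dec; lra. Qed.
Lemma clamp_lip R0 x y : 0 <= R0 -> Rabs (clamp R0 x - clamp R0 y) <= Rabs (x-y).
Proof. intros. unfold clamp, Rmax, Rmin, Rabs. repeat destruct Rle_dec; repeat destruct Rcase_abs; lra. Qed.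

Lemma evt2 F R0 : 0 <= R0 ->
 (forall t r, 0<=t<=R0 -> 0<=r<=R0 -> forall eps, 0<eps -> exists del, 0<del /\
     forall r', 0<=r'<=R0 -> Rabs (r'-r) < del -> Rabs (F t r' - F t r) < eps) ->
 (forall eps, 0<eps -> exists del, 0<del /\ forall t t' r, 0<=t<=R0 -> 0<=t'<=R0 -> 0<=r<=R0 ->
     Rabs (t-t') < del -> Rabs (F t r - F t' r) < eps) ->
 exists t1 r1, 0<=t1<=R0 /\ 0<=r1<=R0 /\
   forall t r, 0<=t<=R0 -> 0<=r<=R0 -> F t r <= F t1 r1.
Proof.
  intros HR Hr Ht.
  assert (Hmax : forall t, exists r1, 0<=r1<=R0 /\ forall r, 0<=r<=R0 -> F (clamp R0 t) r <= F (clamp R0 t) r1).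
  { intros t. pose proof (clamp_in R0 t HR) as Hct.
    destruct (continuity_ab_maj (fun r => F (clamp R0 t) (clamp R0 r)) 0 R0 HR) as [Mx [HM HMx]].
    - intros c Hc. unfold continuity_pt, continue_in, limit1_in, limit_in. simpl. unfold R_dist.
      intros eps He. destruct (Hr (clamp R0 t) c Hct Hc eps He) as [d [Hd H]].
      exists d. split; [lra|]. intros x [_ Hx].
      assert (Hcl : Rabs (clamp R0 x - clamp R0 c) < d) by (eapply Rle_lt_trans; [apply clamp_lip; auto| exact Hx]).
      rewrite (clamp_id R0 c Hc) in *. apply H; [apply clamp_in; auto| exact Hcl].
    - exists Mx. split; auto. intros r Hr'. specialize (HM r Hr'). simpl in HM.
      rewrite (clamp_id R0 r Hr'), (clamp_id R0 Mx HMx) in HM. exact HM. }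
  assert (Hsel : forall t, {r1 | 0<=r1<=R0 /\ forall r, 0<=r<=R0 -> F (clamp R0 t) r <= F (clamp R0 t) r1}).
  { intros t. apply constructive_indefinite_description. apply Hmax. }
  set (G := fun t => F (clamp R0 t) (proj1_sig (Hsel t))).
  destruct (continuity_ab_maj G 0 R0 HR) as [Mx [HM HMx]].
  - intros c Hc. unfold continuity_pt, continue_in, limit1_in, limit_in. simpl. unfold R_dist.
    intros eps He. destruct (Ht (eps/2)) as [d [Hd H]]; [lra|].
    exists d. split; [lra|]. intros x [_ Hx]. unfold G.
    destruct (Hsel x) as [rx [Hrx Hx']]. destruct (Hsel c) as [rc [Hrc Hc']]. simpl.
    assert (Hcl : Rabs (clamp R0 x - clamp R0 c) < d) by (eapply Rle_lt_trans; [apply clamp_lip; auto| exact Hx]).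
    pose proof (H _ _ rx (clamp_in R0 x HR) (clamp_in R0 c HR) Hrx Hcl) as H1.
    pose proof (H _ _ rc (clamp_in R0 x HR) (clamp_in R0 c HR) Hrc Hcl) as H2.
    specialize (Hx' rc Hrc). specialize (Hc' rx Hrx).
    apply Rabs_def1; apply Rabs_def2 in H1; apply Rabs_def2 in H2; lra.
  - exists Mx, (proj1_sig (Hsel Mx)). split; auto. split; [apply (proj2_sig (Hsel Mx))|].
    intros t r Htt Hrr. specialize (HM t Htt). unfold G in HM.
    destruct (proj2_sig (Hsel t)) as [_ Hs]. specialize (Hs r Hrr).
    destruct (Hsel t) as [rt Hrt]; destruct (Hsel Mx) as [rM HrM]; simpl in *.
    rewrite (clamp_id R0 t Htt), (clamp_id R0 Mx HMx) in HM.
    rewrite (clamp_id R0 t Htt) in Hs. lra.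
Qed.

Definition rcont F R0 := forall t r, 0<=t<=R0 -> 0<=r<=R0 -> forall eps, 0<eps -> exists del, 0<del /\
     forall r', 0<=r'<=R0 -> Rabs (r'-r) < del -> Rabs (F t r' - F t r) < eps.
Definition tunif F R0 := forall eps, 0<eps -> exists del, 0<del /\ forall t t' r, 0<=t<=R0 -> 0<=t'<=R0 -> 0<=r<=R0 ->
     Rabs (t-t') < del -> Rabs (F t r - F t' r) < eps.

Lemma rcont_plus F G R0 : rcont F R0 -> rcont G R0 -> rcont (fun t r => F t r + G t r) R0.
Proof.
  intros HF HG t r Ht Hr eps He.
  destruct (HF t r Ht Hr (eps/2)) as [d1 [Hd1 H1]]; [lra|].
  destruct (HG t r Ht Hr (eps/2)) as [d2 [Hd2 H2]]; [lra|].
  exists (Rmin d1 d2). split; [apply Rmin_pos; lra|]. intros r' Hr' Hd.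
  assert (Rabs (r'-r) < d1) by (eapply Rlt_le_trans; [apply Hd|apply Rmin_l]).
  assert (Rabs (r'-r) < d2) by (eapply Rlt_le_trans; [apply Hd|apply Rmin_r]).
  specialize (H1 r' Hr' H). specialize (H2 r' Hr' H0).
  replace (F t r' + G t r' - (F t r + G t r)) with ((F t r' - F t r) + (G t r' - G t r)) by ring.
  eapply Rle_lt_trans; [apply Rabs_triang|]. lra.
Qed.

Lemma tunif_plus F G R0 : tunif F R0 -> tunif G R0 -> tunif (fun t r => F t r + G t r) R0.
Proof.
  intros HF HG eps He.
  destruct (HF (eps/2)) as [d1 [Hd1 H1]]; [lra|].
  destruct (HG (eps/2)) as [d2 [Hd2 H2]]; [lra|].
  exists (Rmin d1 d2). split; [apply Rmin_pos; lra|]. intros t t' r Ht Ht' Hr Hd.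
  assert (Rabs (t-t') < d1) by (eapply Rlt_le_trans; [apply Hd|apply Rmin_l]).
  assert (Rabs (t-t') < d2) by (eapply Rlt_le_trans; [apply Hd|apply Rmin_r]).
  specialize (H1 t t' r Ht Ht' Hr H). specialize (H2 t t' r Ht Ht' Hr H0).
  replace (F t r + G t r - (F t' r + G t' r)) with ((F t r - F t' r) + (G t r - G t' r)) by ring.
  eapply Rle_lt_trans; [apply Rabs_triang|]. lra.
Qed.

Lemma rcont_ext F G R0 : (forall t r, F t r = G t r) -> rcont G R0 -> rcont F R0.
Proof. intros E H t r Ht Hr eps He. destruct (H t r Ht Hr eps He) as [d [Hd H1]].
  exists d; split; auto. intros. rewrite !E. auto. Qed.
Lemma tunif_ext F G R0 : (forall t r, F t r = G t r) -> tunif G R0 -> tunif F R0.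
Proof. intros E H eps He. destruct (H eps He) as [d [Hd H1]].
  exists d; split; auto. intros. rewrite !E. auto. Qed.



Lemma rcont_of_cont F R0 : (forall t x, continuity_pt (F t) x) -> rcont F R0.
Proof.
  intros H t r Ht Hr eps He. specialize (H t r).
  unfold continuity_pt, continue_in, limit1_in, limit_in in H. simpl in H. unfold R_dist in H.
  destruct (H eps He) as [d [Hd H1]]. exists d; split; auto.
  intros r' _ Hr'. destruct (Req_dec r' r) as [->|Hne].
  - rewrite Rminus_diag, Rabs_R0. lra.
  - apply H1. split; auto. unfold D_x, no_cond. split; auto.
Qed.

Lemma tunif_tonly u R0 : 0 <= R0 -> (forall x, continuity_pt u x) -> tunif (fun t r => u t) R0.
Proof.
  intros HR H eps He.
  destruct (Heine u (fun c => 0 <= c <= R0) (compact_P3 0 R0) (fun x _ => H x) (mkposreal eps He)) as [d Hd].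
  exists d. split; [apply cond_pos|]. intros t t' r Ht Ht' _ Htt. apply (Hd t t' Ht Ht' Htt).
Qed.

Lemma rcont_tonly u R0 : rcont (fun t r => u t) R0.
Proof. intros t r _ _ eps He. exists 1. split; [lra|]. intros. rewrite Rminus_diag, Rabs_R0. lra. Qed.
Lemma tunif_ronly v R0 : tunif (fun t r => v r) R0.
Proof. intros eps He. exists 1. split; [lra|]. intros. rewrite Rminus_diag, Rabs_R0. lra. Qed.

Lemma BUC2_rcont m R0 : BUC2 m -> rcont m R0.
Proof.
  intros [_ H] t r Ht Hr eps He. destruct (H eps He) as [d [Hd H1]]. exists d; split; auto.
  intros r' Hr' Hrr. apply H1; try lra. rewrite Rminus_diag, Rabs_R0; lra.
Qed.
Lemma BUC2_tunif m R0 : BUC2 m -> tunif m R0.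
Proof.
  intros [_ H] eps He. destruct (H eps He) as [d [Hd H1]]. exists d; split; auto.
  intros t t' r Ht Ht' Hr Htt. apply H1; try lra. rewrite Rminus_diag, Rabs_R0; lra.
Qed.

Lemma D1_cont u x d : D1 u x d -> continuity_pt u x.
Proof.
  intros H. unfold continuity_pt, continue_in, limit1_in, limit_in. simpl. unfold R_dist.
  intros eps He. destruct (H 1 Rlt_0_1) as [d1 [Hd1 H1]].
  assert (Hk : 0 < Rabs d + 2) by (pose proof (Rabs_pos d); lra).
  exists (Rmin d1 (eps/(Rabs d + 2))). split; [apply Rmin_pos; [lra| apply Rdiv_lt_0_compat; lra]|].
  intros y [_ Hy].
  assert (Hy1 : Rabs (y-x) < d1) by (eapply Rlt_le_trans; [apply Hy|apply Rmin_l]).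
  assert (Hy2 : Rabs (y-x) < eps/(Rabs d + 2)) by (eapply Rlt_le_trans; [apply Hy|apply Rmin_r]).
  specialize (H1 y Hy1).
  replace (u y - u x) with ((u y - u x - d*(y-x)) + d*(y-x)) by ring.
  eapply Rle_lt_trans; [apply Rabs_triang|]. rewrite Rabs_mult.
  assert (E : eps/(Rabs d + 2) * (Rabs d + 2) = eps) by (field; lra).
  pose proof (Rabs_pos d). pose proof (Rabs_pos (y-x)). nra.
Qed.

Lemma pospow_nonneg p a : 0 <= pospow p a.
Proof. unfold pospow. destruct Rle_dec; [lra|]. unfold Rpower. left; apply exp_pos. Qed.

Lemma pospow_mono p q a : 0 <= a -> p <= q -> pospow p a <= pospow q a.
Proof.
  intros Ha Hpq. unfold pospow. destruct (Rle_dec p 0); destruct (Rle_dec q 0).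
  - lra.
  - unfold Rpower. left; apply exp_pos.
  - lra.
  - apply Rle_Rpower_l; lra.
Qed.

Lemma D1_sq x : D1 (fun y => y*y) x (2*x).
Proof. apply (D1_quad _ _ _ 1); [lra|]. intros y.
  replace (y*y - x*x - 2*x*(y-x)) with ((y-x)^2) by ring.
  rewrite Rabs_right; [lra| apply Rle_ge, pow2_ge_0]. Qed.
Lemma D1_lin k x : D1 (fun y => k*y) x k.
Proof. apply (D1_quad _ _ _ 0); [lra|]. intros y.
  replace (k*y - k*x - k*(y-x)) with 0 by ring. rewrite Rabs_R0. pose proof (pow2_ge_0 (y-x)). lra. Qed.
Lemma D1_plus f g x d e : D1 f x d -> D1 g x e -> D1 (fun y => f y + g y) x (d+e).
Proof.
  intros Hf Hg eps He.
  destruct (Hf (eps/2)) as [d1 [Hd1 H1]]; [lra|].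
  destruct (Hg (eps/2)) as [d2 [Hd2 H2]]; [lra|].
  exists (Rmin d1 d2). split; [apply Rmin_pos; lra|]. intros y Hy.
  assert (Rabs (y-x) < d1) by (eapply Rlt_le_trans; [apply Hy|apply Rmin_l]).
  assert (Rabs (y-x) < d2) by (eapply Rlt_le_trans; [apply Hy|apply Rmin_r]).
  specialize (H1 y H). specialize (H2 y H0).
  replace (f y + g y - (f x + g x) - (d + e) * (y - x)) with ((f y - f x - d*(y-x)) + (g y - g x - e*(y-x))) by ring.
  eapply Rle_trans; [apply Rabs_triang|]. lra.
Qed.
Lemma D1_scal k f x d : D1 f x d -> D1 (fun y => k * f y) x (k*d).
Proof.
  intros Hf eps He.
  assert (Hk : 0 < Rabs k + 1) by (pose proof (Rabs_pos k); lra).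
  destruct (Hf (eps/(Rabs k+1))) as [d1 [Hd1 H1]]; [apply Rdiv_lt_0_compat; lra|].
  exists d1. split; auto. intros y Hy. specialize (H1 y Hy).
  replace (k * f y - k * f x - k * d * (y - x)) with (k * (f y - f x - d*(y-x))) by ring.
  rewrite Rabs_mult.
  assert (E : eps / (Rabs k + 1) * (Rabs k + 1) = eps) by (field; lra).
  pose proof (Rabs_pos k). pose proof (Rabs_pos (y-x)). pose proof (Rabs_pos (f y - f x - d*(y-x))). nra.
Qed.


Lemma D1_ext f g x d e : (forall y, f y = g y) -> d = e -> D1 f x d -> D1 g x e.
Proof. intros E E' H eps He. destruct (H eps He) as [del [Hd H1]]. exists del; split; auto.
  intros y Hy. rewrite <- !E, <- E'. auto. Qed.

Lemma FD_ext f g t r p1 p2 q1 q2 : (forall s q, f s q = g s q) -> p1 = q1 -> p2 = q2 -> FD f t r p1 p2 -> FD g t r q1 q2.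
Proof. intros E E1 E2 H eps He. destruct (H eps He) as [del [Hd H1]]. exists del; split; auto.
  intros s q Hs Hq. rewrite <- !E, <- E1, <- E2. auto. Qed.

Lemma upper_bound a m0 m M : is_lub (fun y => exists r, 0 <= r /\ y = m0 r) M -> 0 < M ->
  BUC2 m -> visc_sub a m0 m -> forall t r, 0 <= t -> 0 <= r -> m t r <= M.
Proof.
  intros Hlub HM Hbuc [Hcont [Hsub [Hinit Hbd]]] ts rs Hts Hrs.
  destruct (Rle_dec (m ts rs) M) as [|Hgt]; [auto|exfalso]. apply Rnot_le_lt in Hgt.
  assert (Hm0 : forall r, 0 <= r -> m0 r <= M) by (intros r Hr; apply (proj1 Hlub); exists r; auto).
  destruct (proj1 Hbuc) as [B HB].
  assert (HB0 : 0 <= B) by (pose proof (HB 0 0 (Rle_refl 0) (Rle_refl 0)); pose proof (Rabs_pos (m 0 0)); lra).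
  set (th := m ts rs - M).
  assert (Hth : 0 < th) by (unfold th; lra).
  set (ep := th/(4*(ts+1))).
  set (de := th/(4*(ts*ts+rs*rs+1))).
  assert (Hep : 0 < ep) by (apply Rdiv_lt_0_compat; lra).
  assert (Hde : 0 < de) by (apply Rdiv_lt_0_compat; nra).
  set (u := fun t => ep*t + de*(t*t)).
  set (F := fun t r => m t r + (- u t) + (-de)*(r*r)).
  assert (Hstar : M + th/2 < F ts rs).
  { unfold F, u.
    assert (E1 : ep*(4*(ts+1)) = th) by (unfold ep; field; lra).
    assert (E2 : de*(4*(ts*ts+rs*rs+1)) = th) by (unfold de; field; nra).
    assert (ep*ts <= th/4) by nra.
    assert (de*(ts*ts+rs*rs) <= th/4) by nra.
    unfold th in *. nra. }
  set (R0 := ts + rs + 1 + (2*B+1)/de + (2*B+1)/ep).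
  assert (HBd : 0 < (2*B+1)/de) by (apply Rdiv_lt_0_compat; lra).
  assert (HBe : 0 < (2*B+1)/ep) by (apply Rdiv_lt_0_compat; lra).
  assert (HR0 : 0 <= R0) by (unfold R0; lra).
  assert (Hout : forall t r, 0 <= t -> 0 <= r -> (R0 <= t \/ R0 <= r) -> F t r < F ts rs).
  { intros t r Ht Hr Hor.
    pose proof (HB t r Ht Hr) as Hb. apply Rabs_le_inv in Hb.
    destruct Hor as [H|H].
    - assert (ep * t >= 2*B+1).
      { assert ((2*B+1)/ep <= t) by (unfold R0 in H; lra).
        apply (Rmult_le_compat_l ep) in H0; [|lra]. unfold Rdiv in H0.
        rewrite <- Rmult_assoc, (Rmult_comm ep), Rmult_assoc, Rinv_r in H0; lra. }
      unfold F, u in *. nra.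
    - assert (de * r >= 2*B+1).
      { assert ((2*B+1)/de <= r) by (unfold R0 in H; lra).
        apply (Rmult_le_compat_l de) in H0; [|lra]. unfold Rdiv in H0.
        rewrite <- Rmult_assoc, (Rmult_comm de), Rmult_assoc, Rinv_r in H0; lra. }
      assert (1 <= r) by (unfold R0 in H; lra).
      unfold F, u in *. nra. }
  assert (Du : forall x, D1 (fun y => - u y) x (-(ep + de*(2*x)))).
  { intros x. unfold u.
    pose proof (D1_scal (-1) _ _ _ (D1_plus _ _ x _ _ (D1_lin ep x) (D1_scal de _ _ _ (D1_sq x)))) as H.
    eapply D1_ext; [| |exact H]; simpl; intros; ring. }
  destruct (evt2 F R0 HR0) as [t1 [r1 [Ht1 [Hr1 Hmax]]]].
  { apply rcont_plus; [apply rcont_plus|].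
    - apply BUC2_rcont; auto.
    - apply rcont_tonly.
    - apply rcont_of_cont. intros t x. exact (D1_cont _ _ _ (D1_scal (-de) _ _ _ (D1_sq x))). }
  { apply tunif_plus; [apply tunif_plus|].
    - apply BUC2_tunif; auto.
    - apply tunif_tonly; auto. intros x. exact (D1_cont _ _ _ (Du x)).
    - apply tunif_ronly. }
  assert (Hts0 : ts < R0) by (unfold R0; lra).
  assert (Hrs0 : rs < R0) by (unfold R0; lra).
  assert (Hglob : forall t r, 0 <= t -> 0 <= r -> F t r <= F t1 r1).
  { intros t r Ht Hr. destruct (Rle_dec R0 t) as [H|H].
    - pose proof (Hout t r Ht Hr (or_introl H)). pose proof (Hmax ts rs ltac:(lra) ltac:(lra)). lra.
    - destruct (Rle_dec R0 r) as [H'|H'].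
      + pose proof (Hout t r Ht Hr (or_intror H')). pose proof (Hmax ts rs ltac:(lra) ltac:(lra)). lra.
      + apply Hmax; lra. }
  assert (HF1 : M + th/2 < F t1 r1) by (pose proof (Hglob ts rs Hts Hrs); lra).
  assert (Hm1 : F t1 r1 <= m t1 r1) by (unfold F, u; destruct Ht1; destruct Hr1; nra).
  assert (Ht1p : 0 < t1).
  { destruct (Rle_lt_or_eq_dec 0 t1 (proj1 Ht1)) as [|E]; auto. subst t1.
    pose proof (Hinit r1 (proj1 Hr1)). pose proof (Hm0 r1 (proj1 Hr1)). lra. }
  assert (Hr1p : 0 < r1).
  { destruct (Rle_lt_or_eq_dec 0 r1 (proj1 Hr1)) as [|E]; auto. subst r1.
    pose proof (Hbd t1 (proj1 Ht1)). lra. }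
  assert (Hsd : superdiff m t1 r1 (ep + de*(2*t1)) (de*(2*r1))).
  { apply (touch_super m (fun s q => u s + de*(q*q))); auto.
    - assert (Hu : D1 u t1 (ep + de*(2*t1))).
      { unfold u. exact (D1_plus _ _ t1 _ _ (D1_lin ep t1) (D1_scal de _ _ _ (D1_sq t1))). }
      pose proof (FD_plus _ _ t1 r1 _ _ _ _ (FD_t u t1 r1 _ Hu) (FD_r _ t1 r1 _ (D1_scal de _ _ _ (D1_sq r1)))) as H.
      eapply FD_ext; [| | |exact H]; simpl; intros; ring.
    - intros s q Hs Hq. pose proof (Hglob s q Hs Hq). unfold F in *. lra. }
  pose proof (Hsub t1 r1 _ _ Ht1p Hr1p Hsd).
  pose proof (pospow_nonneg (de*(2*r1)) a). nra.
Qed.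

Definition hh b c0 q := if Rlt_dec q c0 then Rpower (c0 - q) b else 0.
Definition hd b c0 q := if Rlt_dec q c0 then -(b * Rpower (c0-q) (b-1)) else 0.

Lemma D1_loc f g x d r0 : 0 < r0 -> (forall y, Rabs (y-x) < r0 -> f y = g y) -> D1 g x d -> D1 f x d.
Proof.
  intros Hr E H eps He. destruct (H eps He) as [del [Hd H1]].
  exists (Rmin del r0). split; [apply Rmin_pos; lra|]. intros y Hy.
  assert (Rabs (y-x) < del) by (eapply Rlt_le_trans; [apply Hy|apply Rmin_l]).
  assert (Rabs (y-x) < r0) by (eapply Rlt_le_trans; [apply Hy|apply Rmin_r]).
  rewrite (E y H2), (E x); [auto|]. rewrite Rminus_diag, Rabs_R0; lra.
Qed.

Lemma D1_const k x : D1 (fun _ => k) x 0.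
Proof. apply (D1_quad _ _ _ 0); [lra|]. intros y.
  replace (k - k - 0*(y-x)) with 0 by ring. rewrite Rabs_R0. pose proof (pow2_ge_0 (y-x)). lra. Qed.

Lemma hh_D1 b c0 q : 1 < b -> D1 (hh b c0) q (hd b c0 q).
Proof.
  intros Hb. destruct (Rtotal_order q c0) as [Hlt|[Heq|Hgt]].
  - unfold hd at 1. destruct (Rlt_dec q c0); [|lra].
    apply (D1_loc _ (fun y => Rpower (c0 - y) b) _ _ (c0 - q)); [lra| |].
    + intros y Hy. unfold hh. destruct (Rlt_dec y c0) as [|Hn]; auto.
      exfalso; apply Hn; apply Rabs_def2 in Hy. lra.
    + assert (H := derivable_pt_lim_comp (minus_fct (fct_cte c0) id) (fun x => Rpower x b) q (0 - 1) _
        (derivable_pt_lim_minus _ _ q _ _ (derivable_pt_lim_const c0 q) (derivable_pt_lim_id q))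
        (derivable_pt_lim_power (minus_fct (fct_cte c0) id q) b ltac:(unfold minus_fct, fct_cte, id; lra))).
      apply D1_of_derivable in H. eapply D1_ext; [| |exact H].
      * intros y. reflexivity.
      * unfold minus_fct, fct_cte, id. ring.
  - subst q. unfold hd. destruct (Rlt_dec c0 c0); [lra|].
    intros eps He.
    exists (Rpower eps (/(b-1))). split; [unfold Rpower; apply exp_pos|].
    intros y Hy. unfold hh. destruct (Rlt_dec c0 c0); [lra|].
    destruct (Rlt_dec y c0) as [Hy0|Hy0].
    + rewrite Rabs_left in Hy by lra.
      assert (Hy1 : c0 - y < Rpower eps (/(b-1))) by lra.
      assert (E : Rpower (c0-y) b = Rpower (c0-y) (b-1) * (c0 - y)).
      { replace b with ((b-1)+1) at 1 by ring. rewrite Rpower_plus, Rpower_1; [ring|lra]. }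
      assert (Hle : Rpower (c0-y) (b-1) <= eps).
      { replace eps with (Rpower (Rpower eps (/(b-1))) (b-1)).
        - apply Rle_Rpower_l; lra.
        - rewrite Rpower_mult. replace (/(b-1)*(b-1)) with 1 by (field; lra). apply Rpower_1; auto. }
      assert (0 < Rpower (c0-y) (b-1)) by (unfold Rpower; apply exp_pos).
      rewrite E. replace (Rpower (c0 - y) (b - 1) * (c0 - y) - 0 - 0 * (y - c0)) with (Rpower (c0-y) (b-1) * (c0-y)) by ring.
      rewrite Rabs_right by nra. rewrite (Rabs_left (y-c0)) by lra. nra.
    + replace (0 - 0 - 0*(y-c0)) with 0 by ring. rewrite Rabs_R0.
      pose proof (Rabs_pos (y-c0)); nra.
  - unfold hd at 1. destruct (Rlt_dec q c0); [lra|].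
    apply (D1_loc _ (fun _ => 0) _ _ (q - c0)); [lra| |apply D1_const].
    intros y Hy. unfold hh. destruct (Rlt_dec y c0); auto.
    apply Rabs_def2 in Hy. lra.
Qed.

Lemma hh_nonneg b c0 q : 0 <= hh b c0 q.
Proof. unfold hh. destruct Rlt_dec; [unfold Rpower; left; apply exp_pos|lra]. Qed.

Lemma hh_le b c0 q : 0 <= b -> 0 < c0 -> 0 <= q -> hh b c0 q <= Rpower c0 b.
Proof. intros Hb Hc Hq. unfold hh. destruct Rlt_dec.
  - apply Rle_Rpower_l; lra.
  - unfold Rpower; left; apply exp_pos. Qed.

Lemma sub_prop a c0 A cc M t q : 1 < a -> 0 < A -> 0 < M -> cc = Rpower (2*A*(a/(a-1))) a * M / A ->
  0 <= t -> 1 + cc*t <= 2 ->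
  -A*cc*hh (a/(a-1)) c0 q + pospow (-A * hd (a/(a-1)) c0 q * (1+cc*t)) a * M <= 0.
Proof.
  intros Ha HA HM Hcc Ht Hg. set (b := a/(a-1)).
  assert (Hb : 1 < b) by (unfold b; apply (Rmult_lt_reg_r (a-1)); [lra|]; field_simplify; lra).
  assert (Hcc0 : 0 < cc) by (rewrite Hcc; apply Rdiv_lt_0_compat; [apply Rmult_lt_0_compat; [unfold Rpower; apply exp_pos|]|]; lra).
  assert (Hg1 : 1 <= 1 + cc*t) by nra.
  unfold hh, hd. destruct (Rlt_dec q c0) as [Hq|Hq].
  - set (s := c0 - q). assert (Hs : 0 < s) by (unfold s; lra).
    set (p := -A * - (b * Rpower s (b-1)) * (1+cc*t)).
    assert (Hp : p = (A*b*(1+cc*t)) * Rpower s (b-1)) by (unfold p; ring).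
    assert (Hsp : 0 < Rpower s (b-1)) by (unfold Rpower; apply exp_pos).
    assert (Hp0 : 0 < p) by (rewrite Hp; apply Rmult_lt_0_compat; [|auto]; apply Rmult_lt_0_compat; [apply Rmult_lt_0_compat|]; lra).
    assert (HAb : 0 < A*b*(1+cc*t)) by (apply Rmult_lt_0_compat; [apply Rmult_lt_0_compat|]; lra).
    unfold pospow. destruct (Rle_dec p 0); [lra|].
    rewrite Hp, <- Rpower_mult_distr by auto. rewrite Rpower_mult.
    replace ((b-1)*a) with b by (unfold b; field; lra).
    assert (H1 : Rpower (A*b*(1+cc*t)) a <= Rpower (2*A*b) a) by (apply Rle_Rpower_l; [lra|split; [auto|]]; nra).
    assert (H2 : A*cc = Rpower (2*A*b) a * M) by (rewrite Hcc; fold b; field; lra).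
    assert (0 < Rpower s b) by (unfold Rpower; apply exp_pos).
    replace (-A*cc*Rpower s b) with (-(A*cc)*Rpower s b) by ring. rewrite H2.
    assert (Rpower (A*b*(1+cc*t)) a * (Rpower s b * M) <= Rpower (2*A*b) a * (Rpower s b * M)) by (apply Rmult_le_compat_r; nra).
    lra.
  - unfold pospow. replace (-A*0*(1+cc*t)) with 0 by ring. destruct (Rle_dec 0 0); [|lra]. nra.
Qed.

Definition pp x := if Rle_dec x 0 then 0 else x*x.
Definition ppd x := if Rle_dec x 0 then 0 else 2*x.

Lemma pp_quad x y : Rabs (pp y - pp x - ppd x * (y-x)) <= (y-x)^2.
Proof.
  unfold pp, ppd. destruct (Rle_dec y 0) as [Hy|Hy]; destruct (Rle_dec x 0) as [Hx|Hx];
  try apply Rnot_le_lt in Hy; try apply Rnot_le_lt in Hx.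
  - replace (0-0-0*(y-x)) with 0 by ring. rewrite Rabs_R0. pose proof (pow2_ge_0 (y-x)). lra.
  - rewrite Rabs_right; nra.
  - rewrite Rabs_right; nra.
  - replace (y*y - x*x - 2*x*(y-x)) with ((y-x)^2) by ring. pose proof (pow2_ge_0 (y-x)). rewrite Rabs_right; lra.
Qed.

Lemma pp_nonneg x : 0 <= pp x.
Proof. unfold pp; destruct Rle_dec as [|H]; [lra|apply Rnot_le_lt in H; nra]. Qed.
Lemma ppd_nonneg x : 0 <= ppd x.
Proof. unfold ppd; destruct Rle_dec as [|H]; [lra|apply Rnot_le_lt in H; lra]. Qed.

Lemma D1_P ep lam T0 x : 0 <= lam -> D1 (fun y => ep*y + lam*pp(y - T0)) x (ep + lam*ppd(x - T0)).
Proof.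
  intros Hl. apply (D1_quad _ _ _ lam Hl). intros y.
  replace (ep * y + lam * pp (y - T0) - (ep * x + lam * pp (x - T0)) - (ep + lam * ppd (x - T0)) * (y - x))
   with (lam * (pp (y - T0) - pp (x - T0) - ppd (x - T0) * ((y - T0) - (x - T0)))) by ring.
  rewrite Rabs_mult, Rabs_right by lra.
  pose proof (pp_quad (x - T0) (y - T0)). replace ((y - T0) - (x - T0)) with (y - x) in H by ring.
  replace (y - T0 - (x - T0)) with (y - x) by ring.
  apply Rmult_le_compat_l; [lra|]. exact H.
Qed.

Lemma rcont_opp F R0 : rcont F R0 -> rcont (fun t r => - F t r) R0.
Proof. intros H t r Ht Hr eps He. destruct (H t r Ht Hr eps He) as [d [Hd H1]].
  exists d; split; auto. intros. replace (- F t r' - - F t r) with (-(F t r' - F t r)) by ring.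
  rewrite Rabs_Ropp. auto. Qed.
Lemma tunif_opp F R0 : tunif F R0 -> tunif (fun t r => - F t r) R0.
Proof. intros H eps He. destruct (H eps He) as [d [Hd H1]].
  exists d; split; auto. intros. replace (- F t r - - F t' r) with (-(F t r - F t' r)) by ring.
  rewrite Rabs_Ropp. auto. Qed.

Lemma lower_bound a m0 m M c0 A cc :
 1 < a -> 0 < M -> 0 < c0 -> 0 < A -> cc = Rpower (2*A*(a/(a-1))) a * M / A ->
 BUC2 m -> visc_super a m0 m ->
 (forall q, 0 <= q -> M - A * hh (a/(a-1)) c0 q <= m0 q) ->
 M - A * Rpower c0 (a/(a-1)) <= 0 ->
 forall t r, 0 <= t -> t < /(2*cc) -> 0 <= r -> M - A*hh (a/(a-1)) c0 r*(1+cc*t) <= m t r.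
Proof.
  intros Ha HM Hc0 HA Hcc Hbuc [Hcont [Hsup [Hinit Hbd]]] Hw0 Hwb ts rs Hts HtT Hrs.
  set (b := a/(a-1)) in *.
  assert (Hb : 1 < b) by (unfold b; apply (Rmult_lt_reg_r (a-1)); [lra|]; field_simplify; lra).
  assert (Hcc0 : 0 < cc) by (rewrite Hcc; apply Rdiv_lt_0_compat; [apply Rmult_lt_0_compat; [unfold Rpower; apply exp_pos|]|]; lra).
  set (T0 := /(2*cc)).
  assert (HT0 : 0 < T0) by (unfold T0; apply Rinv_0_lt_compat; lra).
  assert (HT0c : cc * (2*T0) = 1) by (unfold T0; field; lra).
  set (w := fun t r => M - A*hh b c0 r*(1+cc*t)).
  destruct (Rle_dec (w ts rs) (m ts rs)) as [|Hgt]; [auto|exfalso]. apply Rnot_le_lt in Hgt.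
  destruct (proj1 Hbuc) as [B HB].
  assert (HB0 : 0 <= B) by (pose proof (HB 0 0 (Rle_refl 0) (Rle_refl 0)); pose proof (Rabs_pos (m 0 0)); lra).
  set (th := w ts rs - m ts rs).
  assert (Hth : 0 < th) by (unfold th; lra).
  set (ep := th/(4*(ts+1))).
  set (de := th/(4*(rs*rs+1))).
  assert (Hep : 0 < ep) by (apply Rdiv_lt_0_compat; lra).
  assert (Hde : 0 < de) by (apply Rdiv_lt_0_compat; nra).
  set (lam := (M+B+1)/(T0*T0)).
  assert (Hlam : 0 < lam) by (apply Rdiv_lt_0_compat; nra).
  assert (Hlam2 : lam * (T0*T0) = M+B+1) by (unfold lam; field; lra).
  set (P := fun t => ep*t + lam*pp(t - T0)).
  set (F := fun t r => w t r + (- m t r) + (- P t) + (-de)*(r*r)).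
  assert (Hwle : forall t r, 0 <= t -> w t r <= M).
  { intros t r Ht. unfold w. pose proof (hh_nonneg b c0 r).
    assert (0 <= A*hh b c0 r*(1+cc*t)) by (apply Rmult_le_pos; [apply Rmult_le_pos|]; nra). lra. }
  assert (HP0 : forall t, 0 <= t -> 0 <= P t).
  { intros t Ht. unfold P. pose proof (pp_nonneg (t - T0)). nra. }
  assert (Hstar : th/2 < F ts rs).
  { unfold F, P. fold th.
    assert (pp (ts - T0) = 0) by (unfold pp; destruct Rle_dec as [|Hn]; [reflexivity| exfalso; apply Hn; unfold T0; lra]).
    rewrite H.
    assert (E1 : ep*(4*(ts+1)) = th) by (unfold ep; field; lra).
    assert (E2 : de*(4*(rs*rs+1)) = th) by (unfold de; field; nra).
    unfold th in *. nra. }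
  set (R0 := 2*T0 + rs + 1 + (M+B+1)/de).
  assert (HBd : 0 < (M+B+1)/de) by (apply Rdiv_lt_0_compat; lra).
  assert (HR0 : 0 <= R0) by (unfold R0; lra).
  assert (Hout : forall t r, 0 <= t -> 0 <= r -> (2*T0 <= t \/ R0 <= r) -> F t r < 0).
  { intros t r Ht Hr Hor.
    pose proof (HB t r Ht Hr) as Hb'. apply Rabs_le_inv in Hb'.
    pose proof (Hwle t r Ht) as Hw1. pose proof (HP0 t Ht) as Hp1.
    destruct Hor as [Ho|Ho].
    - assert (Hpp : pp (t - T0) >= T0*T0).
      { unfold pp; destruct Rle_dec as [Hn|Hn]; [lra|]. nra. }
      assert (lam * pp (t - T0) >= M+B+1) by nra.
      unfold F, P in *. nra.
    - assert (Hdr : de * r >= M+B+1).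
      { assert (Hq : (M+B+1)/de <= r) by (unfold R0 in Ho; lra).
        apply (Rmult_le_compat_l de) in Hq; [|lra]. unfold Rdiv in Hq.
        rewrite <- Rmult_assoc, (Rmult_comm de), Rmult_assoc, Rinv_r in Hq; lra. }
      assert (1 <= r) by (unfold R0 in Ho; lra).
      unfold F in *. nra. }
  assert (DP : forall x, D1 (fun y => - P y) x (-(ep + lam*ppd(x - T0)))).
  { intros x. pose proof (D1_scal (-1) _ _ _ (D1_P ep lam T0 x ltac:(lra))) as H.
    eapply D1_ext; [| |exact H]; unfold P; simpl; intros; ring. }
  destruct (evt2 F R0 HR0) as [t1 [r1 [Ht1 [Hr1 Hmax]]]].
  { apply rcont_plus; [apply rcont_plus; [apply rcont_plus|]|].
    - apply rcont_of_cont. intros t x. unfold w.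
      pose proof (D1_plus _ _ x _ _ (D1_const M x) (D1_scal (-A*(1+cc*t)) _ _ _ (hh_D1 b c0 x Hb))) as H.
      apply D1_cont with (d := 0 + -A*(1+cc*t)*hd b c0 x). eapply D1_ext; [| |exact H]; simpl; intros; ring.
    - apply rcont_opp. apply BUC2_rcont; auto.
    - apply rcont_tonly.
    - apply rcont_of_cont. intros t x. exact (D1_cont _ _ _ (D1_scal (-de) _ _ _ (D1_sq x))). }
  { apply tunif_plus; [apply tunif_plus; [apply tunif_plus|]|].
    - intros eps He. set (H := Rpower c0 b).
      assert (HH : 0 < H) by (unfold H, Rpower; apply exp_pos).
      assert (HK : 0 < A*H*cc+1) by (assert (0 < A*H*cc) by (apply Rmult_lt_0_compat; [apply Rmult_lt_0_compat|]; lra); lra).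
      exists (eps/(A*H*cc+1)). split; [apply Rdiv_lt_0_compat; lra|].
      intros t t' r Ht Ht' Hr Htt.
      unfold w. replace (M - A * hh b c0 r * (1 + cc * t) - (M - A * hh b c0 r * (1 + cc * t')))
        with (-(A*hh b c0 r*cc) * (t - t')) by ring.
      rewrite Rabs_mult, Rabs_Ropp.
      pose proof (hh_le b c0 r ltac:(lra) Hc0 (proj1 Hr)) as Hle. fold H in Hle.
      pose proof (hh_nonneg b c0 r).
      assert (E : eps/(A*H*cc+1) * (A*H*cc+1) = eps) by (field; lra).
      rewrite (Rabs_right (A*hh b c0 r*cc)) by (apply Rle_ge; apply Rmult_le_pos; [apply Rmult_le_pos|]; lra).
      pose proof (Rabs_pos (t - t')).
      assert (A*hh b c0 r*cc <= A*H*cc) by (apply Rmult_le_compat_r; [lra|]; apply Rmult_le_compat_l; lra).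
      assert (0 <= A*hh b c0 r*cc) by (apply Rmult_le_pos; [apply Rmult_le_pos|]; lra).
      nra.
    - apply tunif_opp. apply BUC2_tunif; auto.
    - apply tunif_tonly; auto. intros x. exact (D1_cont _ _ _ (DP x)).
    - apply tunif_ronly. }
  assert (Hts0 : ts < R0) by (unfold R0, T0 in *; lra).
  assert (Hrs0 : rs < R0) by (unfold R0; lra).
  assert (Hglob : forall t r, 0 <= t -> 0 <= r -> F t r <= F t1 r1).
  { intros t r Ht Hr. destruct (Rle_dec R0 t) as [H|H].
    - assert (2*T0 <= t) by (unfold R0 in H; lra).
      pose proof (Hout t r Ht Hr (or_introl H0)). pose proof (Hmax ts rs ltac:(lra) ltac:(lra)). lra.
    - destruct (Rle_dec R0 r) as [H'|H'].
      + pose proof (Hout t r Ht Hr (or_intror H')). pose proof (Hmax ts rs ltac:(lra) ltac:(lra)). lra.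
      + apply Hmax; lra. }
  assert (HF1 : 0 < F t1 r1) by (pose proof (Hglob ts rs Hts Hrs); lra).
  assert (Ht1p : 0 < t1).
  { destruct (Rle_lt_or_eq_dec 0 t1 (proj1 Ht1)) as [|E]; auto. subst t1. exfalso.
    pose proof (Hinit r1 (proj1 Hr1)). pose proof (Hw0 r1 (proj1 Hr1)).
    assert (P 0 = 0) by (unfold P, pp; destruct Rle_dec; lra).
    unfold F, w in HF1. nra. }
  assert (Hr1p : 0 < r1).
  { destruct (Rle_lt_or_eq_dec 0 r1 (proj1 Hr1)) as [|E]; auto. subst r1. exfalso.
    pose proof (Hbd t1 (proj1 Ht1)). pose proof (HP0 t1 (proj1 Ht1)).
    assert (hh b c0 0 = Rpower c0 b) by (unfold hh; destruct Rlt_dec; [f_equal; ring|lra]).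
    unfold F, w in HF1. rewrite H1 in HF1.
    assert (0 < Rpower c0 b) by (unfold Rpower; apply exp_pos). destruct Ht1.
    assert (0 <= A * Rpower c0 b * (cc*t1)) by (apply Rmult_le_pos; [apply Rmult_le_pos|]; nra).
    lra. }
  assert (Ht1T : t1 < 2*T0).
  { destruct (Rlt_le_dec t1 (2*T0)) as [|H]; auto. exfalso.
    pose proof (Hout t1 r1 (proj1 Ht1) (proj1 Hr1) (or_introl H)). lra. }
  set (p1 := -A*cc*hh b c0 r1 + -(ep + lam*ppd(t1 - T0))).
  set (p2 := -A*hd b c0 r1*(1+cc*t1) + -de*(2*r1)).
  assert (Hsd : subdiff m t1 r1 p1 p2).
  { apply (touch_sub m (fun s q => w s q + (- P s) + (-de)*(q*q))); auto.
    - pose proof (FD_plus _ _ _ _ _ _ _ _ (FD_plus _ _ _ _ _ _ _ _ (FD_const M t1 r1)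
          (FD_scal (-A) _ _ _ _ _ (FD_r (hh b c0) t1 r1 _ (hh_D1 b c0 r1 Hb))))
          (FD_scal (-A*cc) _ _ _ _ _ (FD_sr (hh b c0) t1 r1 _ (hh_D1 b c0 r1 Hb)))) as Hw.
      pose proof (FD_plus _ _ _ _ _ _ _ _ (FD_plus _ _ _ _ _ _ _ _ Hw (FD_t (fun y => - P y) t1 r1 _ (DP t1)))
          (FD_r _ t1 r1 _ (D1_scal (-de) _ _ _ (D1_sq r1)))) as H.
      eapply FD_ext; [| | |exact H]; unfold w, p1, p2; simpl; intros; ring.
    - intros s q Hs Hq. pose proof (Hglob s q Hs Hq). unfold F in *. lra. }
  pose proof (Hsup t1 r1 _ _ Ht1p Hr1p Hsd) as Hs.
  pose proof (sub_prop a c0 A cc M t1 r1 Ha HA HM Hcc (proj1 Ht1) ltac:(nra)) as Hsp. fold b in Hsp.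
  assert (Hm1 : m t1 r1 < M).
  { pose proof (Hwle t1 r1 (proj1 Ht1)). pose proof (HP0 t1 (proj1 Ht1)). unfold F in HF1. nra. }
  assert (Hmono : pospow p2 a <= pospow (-A * hd b c0 r1 * (1+cc*t1)) a).
  { apply pospow_mono; [lra|]. unfold p2. nra. }
  pose proof (pospow_nonneg p2 a). pose proof (pospow_nonneg (-A * hd b c0 r1 * (1+cc*t1)) a).
  pose proof (ppd_nonneg (t1 - T0)).
  unfold p1 in Hs.
  destruct (Rle_dec 0 (m t1 r1)).
  - assert (pospow p2 a * m t1 r1 <= pospow (-A * hd b c0 r1 * (1+cc*t1)) a * M) by nra. nra.
  - assert (pospow p2 a * m t1 r1 <= 0) by nra. nra.
Qed.

Theorem mainTheorem8 (a : R) (m0 : R -> R) (M c0 : R) :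
  1 < a ->
  BUC1 m0 ->
  (forall x y, 0 <= x -> x <= y -> m0 x <= m0 y) ->
  m0 0 = 0 ->
  is_lub (fun y => exists r, 0 <= r /\ y = m0 r) M ->
  0 < M ->
  0 < c0 ->
  (forall r, 0 <= r -> r < c0 -> m0 r < M) ->
  (forall r, c0 <= r -> m0 r = M) ->
  (exists K del, 0 < del /\ forall r, c0 - del < r -> r < c0 ->
      (M - m0 r) / Rpower (c0 - r) (a / (a - 1)) <= K) ->
  exists T, 0 < T /\
    forall m, BUC2 m -> visc_sol a m0 m ->
      forall t r, 0 <= t -> t < T -> c0 <= r -> m t r = M.
Proof.
  intros Ha Hbuc Hmono Hm00 Hlub HM Hc0 Hlt Heq [K [del [Hdel HK]]].
  set (b := a/(a-1)) in *.
  assert (Hb : 1 < b) by (unfold b; apply (Rmult_lt_reg_r (a-1)); [lra|]; field_simplify; lra).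
  set (d0 := Rmin del c0).
  assert (Hd0 : 0 < d0) by (apply Rmin_pos; lra).
  assert (Hpd0 : 0 < Rpower d0 b) by (unfold Rpower; apply exp_pos).
  set (A := Rmax K (M / Rpower d0 b)).
  assert (HA1 : M / Rpower d0 b <= A) by apply Rmax_r.
  assert (HAK : K <= A) by apply Rmax_l.
  assert (HMd : 0 < M / Rpower d0 b) by (apply Rdiv_lt_0_compat; lra).
  assert (HA : 0 < A) by lra.
  assert (HAd : M <= A * Rpower d0 b).
  { apply (Rmult_le_compat_r (Rpower d0 b)) in HA1; [|lra].
    unfold Rdiv in HA1. rewrite Rmult_assoc, Rinv_l in HA1; lra. }
  set (cc := Rpower (2*A*b) a * M / A).
  assert (Hcc0 : 0 < cc) by (unfold cc; apply Rdiv_lt_0_compat; [apply Rmult_lt_0_compat; [unfold Rpower; apply exp_pos|]|]; lra).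
  exists (/(2*cc)). split; [apply Rinv_0_lt_compat; lra|].
  intros m Hm [Hsub Hsup] t r Ht HtT Hr.
  assert (Hup := upper_bound a m0 m M Hlub HM Hm Hsub t r Ht ltac:(lra)).
  assert (Hw0 : forall q, 0 <= q -> M - A * hh b c0 q <= m0 q).
  { intros q Hq. unfold hh. destruct (Rlt_dec q c0) as [Hqc|Hqc].
    - assert (Hpq : 0 < Rpower (c0 - q) b) by (unfold Rpower; apply exp_pos).
      destruct (Rlt_dec (c0 - del) q) as [Hq1|Hq1].
      + specialize (HK q Hq1 Hqc).
        assert (M - m0 q <= K * Rpower (c0 - q) b).
        { apply (Rmult_le_compat_r (Rpower (c0 - q) b)) in HK; [|lra].
          unfold Rdiv in HK. rewrite Rmult_assoc, Rinv_l in HK; lra. }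
        nra.
      + assert (d0 <= c0 - q) by (unfold d0; pose proof (Rmin_l del c0); lra).
        assert (Rpower d0 b <= Rpower (c0 - q) b) by (apply Rle_Rpower_l; lra).
        pose proof (Hmono 0 q (Rle_refl 0) Hq). nra.
    - rewrite Heq by lra. lra. }
  assert (Hwb : M - A * Rpower c0 b <= 0).
  { assert (d0 <= c0) by apply Rmin_r.
    assert (Rpower d0 b <= Rpower c0 b) by (apply Rle_Rpower_l; lra). nra. }
  assert (Hlow := lower_bound a m0 m M c0 A cc Ha HM Hc0 HA eq_refl Hm Hsup Hw0 Hwb t r Ht HtT ltac:(lra)).
  assert (hh b c0 r = 0) by (unfold hh; destruct Rlt_dec; [lra|reflexivity]).
  fold b in Hlow. rewrite H in Hlow. lra.
Qed.
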